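(* Let $(L,\rho,\tau)$ be a probabilistic metric space whose triangle function $\tau$ is sup-continuous and satisfies condition (W). Then the subfamily $P_{fb}(L)$ of nonempty closed bounded subsets and the subfamily $P_{ftb}(L)$ of nonempty closed totally bounded subsets are closed in $P_f(L)$ with respect to the probabilistic Pompeiu–Hausdorff metric $H$ (i.e. if $A_n\to A$ in $(P_f(L),H)$ with all $A_n$ in the subfamily, then $A$ is in the subfamily). Consequently, if $L$ is complete, then $P_{fb}(L)$ and the family $P_k(L)$ of nonempty compact subsets of $L$ are complete with respect to $H$.
   Context: $\Delta^+$ is the set of functions $F:[-\infty,\infty]\to[0,1]$ that are nondecreasing, left-continuous on $\mathbb R$, with $F(-\infty)=0$, $F(\infty)=1$ and $F(0)=0$; ordered pointwise. $\epsilon_0(x)=0$ for $x\le0$, $=1$ for $x>0$. Infimum of $\{F_i\}$ in $\Delta^+$: $G(x)=\sup_{x'<x}\inf_iF_i(x')$; supremum: pointwise. A triangle function is $\tau:\Delta^+\times\Delta^+\to\Delta^+$ commutative, associative, nondecreasing in each argument, with $\tau(F,\epsilon_0)=F$, continuous for weak convergence. A probabilistic metric space $(L,\rho,\tau)$: set $L$, continuous triangle function $\tau$, $\rho:L\times L\to\Delta^+$, $\rho(p,q)=F_{pq}$, with $F_{pp}=\epsilon_0$, $F_{pq}=\epsilon_0\Rightarrow p=q$, $F_{pq}=F_{qp}$, $F_{pr}\ge\tau(F_{pq},F_{qr})$. Strong topology: neighborhood base $U_t(p)=\{q:F_{pq}(t)>1-t\}$; it comes from the uniformity with vicinities $U_t=\{(p,q):F_{pq}(t)>1-t\}$,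 $t>0$; convergence, Cauchy sequences, completeness, compactness refer to it. A set $Y\subset L$ is totally bounded if for every $t>0$ there is a finite $Z\subset L$ with $Y\subset\bigcup_{z\in Z}U_t(z)$. A set $A$ is bounded if $\sup_{t>0}\Phi_A(t)=1$ where $\Phi_A(t)=\inf\{F_{pp'}(t):p,p'\in A\}$. $\tau$ is sup-continuous if $\tau(\sup_iF_i,G)=\sup_i\tau(F_i,G)$ for every family $\{F_i\}\subset\Delta^+$, $G\in\Delta^+$. Condition (W): for all $x>0$, $F,G\in\Delta^+$, $\alpha,\beta\in\mathbb R$, $F(x)>\alpha$ and $G(x)>\beta$ imply $\tau(F,G)(x)>\alpha+\beta-1$. For nonempty $A,B\subset L$: $F_{pB}(x)=\sup_{q\in B}F_{pq}(x)$, $\Gamma^*_{AB}(x)=\inf_{p\in A}F_{pB}(x)$, $F^*_{AB}(x)=\sup_{x'<x}\Gamma^*_{AB}(x')$, $H(A,B)=F_{AB}=\min\{F^*_{AB},F^*_{BA}\}$. $P_f(L)$ is the family of nonempty closed subsets; $A_n\to A$ in $(P_f(L),H)$ iff for every $t>0$, $F_{A_nA}(t)>1-t$ for all large $n$; Cauchy sequences for $H$ analogously. *)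

(* Defs.v *)
From Stdlib Require Import Reals List.
From Coquelicot Require Import Coquelicot.
Open Scope R_scope.

(* Distribution functions are represented by their restriction to R; the values
   F(-oo)=0 and F(+oo)=1 are fixed by convention and need not be stored. *)
Definition dfun := R -> R.

Definition Rsup (E : R -> Prop) : R := real (Lub_Rbar E).
Definition Rinf (E : R -> Prop) : R := real (Glb_Rbar E).

Definition in_Dplus (F : dfun) : Prop :=
  (forall x, 0 <= F x <= 1) /\
  (forall x y, x <= y -> F x <= F y) /\
  (forall x eps, 0 < eps -> exists delta, 0 < delta /\
       forall y, x - delta < y < x -> Rabs (F y - F x) < eps) /\
  F 0 = 0.

Definition eps0 : dfun := fun x => if Rle_dec x 0 then 0 else 1.

Definition cont_at (F : dfun) (x : R) : Prop :=
  forall eps, 0 < eps -> exists delta, 0 < delta /\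
    forall y, Rabs (y - x) < delta -> Rabs (F y - F x) < eps.

Definition weak_cv (Fn : nat -> dfun) (F : dfun) : Prop :=
  forall x, cont_at F x -> Un_cv (fun n => Fn n x) (F x).

Definition dle (F G : dfun) : Prop := forall x, F x <= G x.
Definition deq (F G : dfun) : Prop := forall x, F x = G x.

Definition triangle_function (tau : dfun -> dfun -> dfun) : Prop :=
  (forall F G, in_Dplus F -> in_Dplus G -> in_Dplus (tau F G)) /\
  (forall F G, in_Dplus F -> in_Dplus G -> deq (tau F G) (tau G F)) /\
  (forall F G K, in_Dplus F -> in_Dplus G -> in_Dplus K ->
      deq (tau (tau F G) K) (tau F (tau G K))) /\
  (forall F F' G, in_Dplus F -> in_Dplus F' -> in_Dplus G -> dle F F' ->
      dle (tau F G) (tau F' G) /\ dle (tau G F) (tau G F')) /\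
  (forall F, in_Dplus F -> deq (tau F eps0) F) /\
  (forall Fn Gn F G, (forall n, in_Dplus (Fn n)) -> (forall n, in_Dplus (Gn n)) ->
      in_Dplus F -> in_Dplus G -> weak_cv Fn F -> weak_cv Gn G ->
      weak_cv (fun n => tau (Fn n) (Gn n)) (tau F G)).

Definition PM_space (L : Type) (rho : L -> L -> dfun) (tau : dfun -> dfun -> dfun) : Prop :=
  triangle_function tau /\
  (forall p q, in_Dplus (rho p q)) /\
  (forall p, deq (rho p p) eps0) /\
  (forall p q, deq (rho p q) eps0 -> p = q) /\
  (forall p q, deq (rho p q) (rho q p)) /\
  (forall p q r, dle (tau (rho p q) (rho q r)) (rho p r)).

Definition sup_continuous (tau : dfun -> dfun -> dfun) : Prop :=
  forall (I : Type) (Fi : I -> dfun) (S G : dfun),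
    (forall i, in_Dplus (Fi i)) -> in_Dplus G ->
    (forall x, is_lub (fun y => exists i, y = Fi i x) (S x)) ->
    forall x, is_lub (fun y => exists i, y = tau (Fi i) G x) (tau S G x).

Definition condW (tau : dfun -> dfun -> dfun) : Prop :=
  forall x F G alpha beta, 0 < x -> in_Dplus F -> in_Dplus G ->
    F x > alpha -> G x > beta -> tau F G x > alpha + beta - 1.

Section PM.
Context {L : Type} (rho : L -> L -> dfun).

Definition Unb (t : R) (p q : L) : Prop := rho p q t > 1 - t.

Definition is_open (O : L -> Prop) : Prop :=
  forall p, O p -> exists t, 0 < t /\ forall q, Unb t p q -> O q.
Definition is_closed (A : L -> Prop) : Prop := is_open (fun p => ~ A p).

Definition nonempty (A : L -> Prop) : Prop := exists p, A p.

Definition seq_cv (pn : nat -> L) (p : L) : Prop :=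
  forall t, 0 < t -> exists N, forall n, (N <= n)%nat -> Unb t p (pn n).
Definition seq_cauchy (pn : nat -> L) : Prop :=
  forall t, 0 < t -> exists N, forall m n, (N <= m)%nat -> (N <= n)%nat ->
    Unb t (pn m) (pn n).
Definition complete : Prop :=
  forall pn, seq_cauchy pn -> exists p, seq_cv pn p.

Definition totally_bounded (Y : L -> Prop) : Prop :=
  forall t, 0 < t -> exists Z : list L, forall y, Y y -> exists z, In z Z /\ Unb t z y.

Definition Phi (A : L -> Prop) (t : R) : R :=
  Rinf (fun y => exists p p', A p /\ A p' /\ y = rho p p' t).
Definition bounded (A : L -> Prop) : Prop :=
  Rsup (fun y => exists t, 0 < t /\ y = Phi A t) = 1.

Definition compact (A : L -> Prop) : Prop :=
  forall (I : Type) (U : I -> L -> Prop), (forall i, is_open (U i)) ->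
    (forall p, A p -> exists i, U i p) ->
    exists l : list I, forall p, A p -> exists i, In i l /\ U i p.

Definition FpB (p : L) (B : L -> Prop) (x : R) : R :=
  Rsup (fun y => exists q, B q /\ y = rho p q x).
Definition GammaStar (A B : L -> Prop) (x : R) : R :=
  Rinf (fun y => exists p, A p /\ y = FpB p B x).
Definition FStar (A B : L -> Prop) (x : R) : R :=
  Rsup (fun y => exists x', x' < x /\ y = GammaStar A B x').
Definition Hpm (A B : L -> Prop) (x : R) : R := Rmin (FStar A B x) (FStar B A x).

Definition H_cv (An : nat -> L -> Prop) (A : L -> Prop) : Prop :=
  forall t, 0 < t -> exists N, forall n, (N <= n)%nat -> Hpm (An n) A t > 1 - t.
Definition H_cauchy (An : nat -> L -> Prop) : Prop :=
  forall t, 0 < t -> exists N, forall m n, (N <= m)%nat -> (N <= n)%nat ->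
    Hpm (An m) (An n) t > 1 - t.

Definition Pf (A : L -> Prop) : Prop := nonempty A /\ is_closed A.
Definition Pfb (A : L -> Prop) : Prop := Pf A /\ bounded A.
Definition Pftb (A : L -> Prop) : Prop := Pf A /\ totally_bounded A.
Definition Pk (A : L -> Prop) : Prop := nonempty A /\ compact A.

Definition H_closed_family (P : (L -> Prop) -> Prop) : Prop :=
  forall An A, (forall n, P (An n)) -> Pf A -> H_cv An A -> P A.
Definition H_complete_family (P : (L -> Prop) -> Prop) : Prop :=
  forall An, (forall n, P (An n)) -> H_cauchy An -> exists A, P A /\ H_cv An A.
End PM.

(* Main.v *)
Require Import Defs.
From Stdlib Require Import Reals Lra Lia List Classical ClassicalEpsilon.
From Coquelicot Require Import Coquelicot.
Open Scope R_scope.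

Lemma Rsup_spec (E : R -> Prop) (b x0 : R) : E x0 -> (forall x, E x -> x <= b) ->
  (forall x, E x -> x <= Rsup E) /\ (forall c, (forall x, E x -> x <= c) -> Rsup E <= c).
Proof.
  intros H0 Hb. unfold Rsup. destruct (Lub_Rbar_correct E) as [H1 H2].
  destruct (Lub_Rbar E) as [l| |] eqn:El; simpl.
  - split.
    + intros x Hx. exact (H1 x Hx).
    + intros c Hc. apply (H2 (Finite c)). intros x Hx; exact (Hc x Hx).
  - exfalso. specialize (H2 (Finite b)). simpl in H2. apply H2. intros x Hx; exact (Hb x Hx).
  - exfalso. specialize (H1 x0 H0). simpl in H1. exact H1.
Qed.

Lemma Rinf_spec (E : R -> Prop) (b x0 : R) : E x0 -> (forall x, E x -> b <= x) ->
  (forall x, E x -> Rinf E <= x) /\ (forall c, (forall x, E x -> c <= x) -> c <= Rinf E).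
Proof.
  intros H0 Hb. unfold Rinf. destruct (Glb_Rbar_correct E) as [H1 H2].
  destruct (Glb_Rbar E) as [l| |] eqn:El; simpl.
  - split.
    + intros x Hx. exact (H1 x Hx).
    + intros c Hc. apply (H2 (Finite c)). intros x Hx; exact (Hc x Hx).
  - exfalso. specialize (H1 x0 H0). simpl in H1. exact H1.
  - exfalso. specialize (H2 (Finite b)). simpl in H2. apply H2. intros x Hx; exact (Hb x Hx).
Qed.

Lemma rho_range {L} rho tau (HPM : PM_space L rho tau) p q x : 0 <= rho p q x <= 1.
Proof. destruct HPM as [_ [Hin _]]. destruct (Hin p q) as [H _]. apply H. Qed.

Lemma rho_mono {L} rho tau (HPM : PM_space L rho tau) p q x y : x <= y -> rho p q x <= rho p q y.
Proof. destruct HPM as [_ [Hin _]]. destruct (Hin p q) as [_ [H _]]. apply H. Qed.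

Lemma rho_0 {L} rho tau (HPM : PM_space L rho tau) p q : rho p q 0 = 0.
Proof. destruct HPM as [_ [Hin _]]. destruct (Hin p q) as [_ [_ [_ H]]]. apply H. Qed.

Lemma rho_sym {L} rho tau (HPM : PM_space L rho tau) p q x : rho p q x = rho q p x.
Proof. destruct HPM as [_ [_ [_ [_ [H _]]]]]. apply H. Qed.

Lemma rho_refl {L} rho tau (HPM : PM_space L rho tau) p x : rho p p x = eps0 x.
Proof. destruct HPM as [_ [_ [H _]]]. apply H. Qed.

Lemma tri {L} rho tau (HPM : PM_space L rho tau) (HW : condW tau) p q r x a b :
  0 < x -> rho p q x > a -> rho q r x > b -> rho p r x > a + b - 1.
Proof.
  intros Hx H1 H2. pose proof HPM as [_ [Hin [_ [_ [_ Htr]]]]].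
  pose proof (HW x (rho p q) (rho q r) a b Hx (Hin p q) (Hin q r) H1 H2).
  specialize (Htr p q r x). simpl in *. lra.
Qed.

Lemma Unb_pos {L} rho tau (HPM : PM_space L rho tau) t p q : Unb rho t p q -> 0 < t.
Proof.
  unfold Unb; intro H. destruct (Rle_or_lt t 0) as [Ht|Ht]; [|exact Ht].
  pose proof (rho_mono rho tau HPM p q t 0 Ht). rewrite (rho_0 rho tau HPM) in H0. lra.
Qed.

Lemma Unb_mono {L} rho tau (HPM : PM_space L rho tau) s t p q : s <= t -> Unb rho s p q -> Unb rho t p q.
Proof.
  unfold Unb; intros Hst H. pose proof (rho_mono rho tau HPM p q s t Hst). lra.
Qed.

Lemma Unb_sym {L} rho tau (HPM : PM_space L rho tau) t p q : Unb rho t p q -> Unb rho t q p.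
Proof. unfold Unb. rewrite (rho_sym rho tau HPM). auto. Qed.

Lemma Unb_refl {L} rho tau (HPM : PM_space L rho tau) t p : 0 < t -> Unb rho t p p.
Proof.
  unfold Unb. intro Ht. rewrite (rho_refl rho tau HPM). unfold eps0.
  destruct (Rle_dec t 0); lra.
Qed.

Lemma Unb_trans {L} rho tau (HPM : PM_space L rho tau) (HW : condW tau) s s' p q r :
  Unb rho s p q -> Unb rho s' q r -> Unb rho (s + s') p r.
Proof.
  intros H1 H2. pose proof (Unb_pos _ _ HPM _ _ _ H1). pose proof (Unb_pos _ _ HPM _ _ _ H2).
  unfold Unb in *. set (x := Rmax s s').
  assert (Hx1 : s <= x) by apply Rmax_l. assert (Hx2 : s' <= x) by apply Rmax_r.
  assert (Hx3 : x <= s + s') by (unfold x; apply Rmax_lub; lra).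
  pose proof (rho_mono rho tau HPM p q _ _ Hx1). pose proof (rho_mono rho tau HPM q r _ _ Hx2).
  pose proof (rho_mono rho tau HPM p r _ _ Hx3).
  assert (0 < x) by lra.
  pose proof (tri rho tau HPM HW p q r x (1 - s) (1 - s') H6 ltac:(lra) ltac:(lra)). lra.
Qed.

Lemma FpB_range {L} rho tau (HPM : PM_space L rho tau) p (B : L -> Prop) x :
  nonempty B -> 0 <= FpB rho p B x <= 1.
Proof.
  intros [q0 Hq0]. unfold FpB.
  destruct (Rsup_spec (fun y => exists q, B q /\ y = rho p q x) 1 (rho p q0 x))
    as [H1 H2].
  - exists q0; auto.
  - intros y [q [_ ->]]. apply (rho_range rho tau HPM).
  - split.
    + pose proof (H1 (rho p q0 x) (ex_intro _ q0 (conj Hq0 eq_refl))).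
      pose proof (rho_range rho tau HPM p q0 x). lra.
    + apply H2. intros y [q [_ ->]]. apply (rho_range rho tau HPM).
Qed.

Lemma FpB_ge {L} rho tau (HPM : PM_space L rho tau) p (B : L -> Prop) x q :
  B q -> rho p q x <= FpB rho p B x.
Proof.
  intros Hq. unfold FpB.
  destruct (Rsup_spec (fun y => exists q, B q /\ y = rho p q x) 1 (rho p q x))
    as [H1 H2].
  - exists q; auto.
  - intros y [q' [_ ->]]. apply (rho_range rho tau HPM).
  - apply H1. exists q; auto.
Qed.

Lemma FpB_gt {L} rho tau (HPM : PM_space L rho tau) p (B : L -> Prop) x c :
  nonempty B -> FpB rho p B x > c -> exists q, B q /\ rho p q x > c.
Proof.
  intros [q0 Hq0] Hc. apply NNPP. intro Hn.
  assert (FpB rho p B x <= c); [|lra].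
  unfold FpB.
  destruct (Rsup_spec (fun y => exists q, B q /\ y = rho p q x) 1 (rho p q0 x))
    as [H1 H2].
  - exists q0; auto.
  - intros y [q' [_ ->]]. apply (rho_range rho tau HPM).
  - apply H2. intros y [q [Hq ->]]. apply Rnot_lt_le. intro. apply Hn. exists q; split; auto.
Qed.

Lemma Gamma_range {L} rho tau (HPM : PM_space L rho tau) (A B : L -> Prop) x :
  nonempty A -> nonempty B -> 0 <= GammaStar rho A B x <= 1.
Proof.
  intros [p0 Hp0] HB. unfold GammaStar.
  destruct (Rinf_spec (fun y => exists p, A p /\ y = FpB rho p B x) 0 (FpB rho p0 B x))
    as [H1 H2].
  - exists p0; auto.
  - intros y [p [_ ->]]. apply (FpB_range rho tau HPM); auto.
  - split.
    + apply H2. intros y [p [_ ->]]. apply (FpB_range rho tau HPM); auto.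
    + pose proof (H1 _ (ex_intro _ p0 (conj Hp0 eq_refl))).
      pose proof (FpB_range rho tau HPM p0 B x HB). lra.
Qed.

Lemma Gamma_le {L} rho tau (HPM : PM_space L rho tau) (A B : L -> Prop) x p :
  nonempty B -> A p -> GammaStar rho A B x <= FpB rho p B x.
Proof.
  intros HB Hp. unfold GammaStar.
  destruct (Rinf_spec (fun y => exists p, A p /\ y = FpB rho p B x) 0 (FpB rho p B x))
    as [H1 H2].
  - exists p; auto.
  - intros y [p' [_ ->]]. apply (FpB_range rho tau HPM); auto.
  - apply H1. exists p; auto.
Qed.

Lemma Gamma_ge {L} rho tau (HPM : PM_space L rho tau) (A B : L -> Prop) x c :
  nonempty A -> nonempty B -> (forall p, A p -> c <= FpB rho p B x) -> c <= GammaStar rho A B x.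
Proof.
  intros [p0 Hp0] HB Hc. unfold GammaStar.
  destruct (Rinf_spec (fun y => exists p, A p /\ y = FpB rho p B x) 0 (FpB rho p0 B x))
    as [H1 H2].
  - exists p0; auto.
  - intros y [p' [_ ->]]. apply (FpB_range rho tau HPM); auto.
  - apply H2. intros y [p [Hp ->]]. auto.
Qed.

Lemma FStar_spec {L} rho tau (HPM : PM_space L rho tau) (A B : L -> Prop) t :
  nonempty A -> nonempty B ->
  (forall x', x' < t -> GammaStar rho A B x' <= FStar rho A B t) /\
  (forall c, (forall x', x' < t -> GammaStar rho A B x' <= c) -> FStar rho A B t <= c).
Proof.
  intros HA HB. unfold FStar.
  destruct (Rsup_spec (fun y => exists x', x' < t /\ y = GammaStar rho A B x') 1
     (GammaStar rho A B (t - 1))) as [H1 H2].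
  - exists (t - 1). split; [lra|auto].
  - intros y [x' [_ ->]]. apply (Gamma_range rho tau HPM); auto.
  - split.
    + intros x' Hx'. apply H1. exists x'; auto.
    + intros c Hc. apply H2. intros y [x' [Hx' ->]]. auto.
Qed.

Lemma FStar_unb {L} rho tau (HPM : PM_space L rho tau) (A B : L -> Prop) t :
  nonempty A -> nonempty B -> FStar rho A B t > 1 - t ->
  forall p, A p -> exists q, B q /\ Unb rho t p q.
Proof.
  intros HA HB Ht p Hp.
  destruct (FStar_spec rho tau HPM A B t HA HB) as [_ H2].
  destruct (classic (exists x', x' < t /\ GammaStar rho A B x' > 1 - t)) as [[x' [Hx' Hg]]|Hn].
  - pose proof (Gamma_le rho tau HPM A B x' p HB Hp).
    destruct (FpB_gt rho tau HPM p B x' (1 - t) HB ltac:(lra)) as [q [Hq Hr]].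
    exists q. split; auto. unfold Unb.
    pose proof (rho_mono rho tau HPM p q x' t ltac:(lra)). lra.
  - exfalso. assert (FStar rho A B t <= 1 - t); [|lra].
    apply H2. intros x' Hx'. apply Rnot_lt_le. intro. apply Hn. exists x'; split; auto.
Qed.

Lemma H_unb {L} rho tau (HPM : PM_space L rho tau) (A B : L -> Prop) t :
  nonempty A -> nonempty B -> Hpm rho A B t > 1 - t ->
  (forall p, A p -> exists q, B q /\ Unb rho t p q) /\
  (forall q, B q -> exists p, A p /\ Unb rho t q p).
Proof.
  intros HA HB H. unfold Hpm in H.
  pose proof (Rmin_l (FStar rho A B t) (FStar rho B A t)).
  pose proof (Rmin_r (FStar rho A B t) (FStar rho B A t)).
  split; apply (FStar_unb rho tau HPM); auto; lra.
Qed.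

Lemma FStar_of_unb {L} rho tau (HPM : PM_space L rho tau) (A B : L -> Prop) s t :
  nonempty A -> nonempty B -> s < t ->
  (forall p, A p -> exists q, B q /\ Unb rho s p q) -> FStar rho A B t > 1 - t.
Proof.
  intros HA HB Hst H.
  destruct (FStar_spec rho tau HPM A B t HA HB) as [H1 _].
  pose proof (H1 s Hst).
  assert (1 - s <= GammaStar rho A B s); [|lra].
  apply (Gamma_ge rho tau HPM); auto.
  intros p Hp. destruct (H p Hp) as [q [Hq Hu]]. unfold Unb in Hu.
  pose proof (FpB_ge rho tau HPM p B s q Hq). lra.
Qed.

Lemma H_of_unb {L} rho tau (HPM : PM_space L rho tau) (A B : L -> Prop) s t :
  nonempty A -> nonempty B -> s < t ->
  (forall p, A p -> exists q, B q /\ Unb rho s p q) ->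
  (forall q, B q -> exists p, A p /\ Unb rho s q p) ->
  Hpm rho A B t > 1 - t.
Proof.
  intros HA HB Hst H1 H2. unfold Hpm.
  pose proof (FStar_of_unb rho tau HPM A B s t HA HB Hst H1).
  pose proof (FStar_of_unb rho tau HPM B A s t HB HA Hst H2).
  unfold Rmin. destruct (Rle_dec _ _); lra.
Qed.

Lemma Phi_spec {L} rho tau (HPM : PM_space L rho tau) (A : L -> Prop) t :
  nonempty A ->
  (forall p p', A p -> A p' -> Phi rho A t <= rho p p' t) /\
  (forall c, (forall p p', A p -> A p' -> c <= rho p p' t) -> c <= Phi rho A t) /\
  Phi rho A t <= 1.
Proof.
  intros [p0 Hp0]. unfold Phi.
  destruct (Rinf_spec (fun y => exists p p', A p /\ A p' /\ y = rho p p' t) 0 (rho p0 p0 t))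
    as [H1 H2].
  - exists p0, p0; auto.
  - intros y [p [p' [_ [_ ->]]]]. apply (rho_range rho tau HPM).
  - split; [|split].
    + intros p p' Hp Hp'. apply H1. exists p, p'; auto.
    + intros c Hc. apply H2. intros y [p [p' [Hp [Hp' ->]]]]. auto.
    + pose proof (H1 (rho p0 p0 t) (ex_intro _ p0 (ex_intro _ p0 (conj Hp0 (conj Hp0 eq_refl))))).
      pose proof (rho_range rho tau HPM p0 p0 t). lra.
Qed.

Lemma bounded_iff {L} rho tau (HPM : PM_space L rho tau) (A : L -> Prop) :
  nonempty A ->
  (Defs.bounded rho A <-> forall e, 0 < e -> exists t, 0 < t /\
     forall p p', A p -> A p' -> rho p p' t >= 1 - e).
Proof.
  intros HA. unfold bounded.
  destruct (Rsup_spec (fun y => exists t, 0 < t /\ y = Phi rho A t) 1 (Phi rho A 1)) as [S1 S2].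
  - exists 1. split; [lra|auto].
  - intros y [t [_ ->]]. apply (Phi_spec rho tau HPM A t HA).
  - split.
    + intros Heq e He.
      destruct (classic (exists t, 0 < t /\ Phi rho A t > 1 - e)) as [[t [Ht Hg]]|Hn].
      * exists t. split; auto. intros p p' Hp Hp'.
        destruct (Phi_spec rho tau HPM A t HA) as [P1 _].
        pose proof (P1 p p' Hp Hp'). lra.
      * exfalso. assert (Hle : Rsup (fun y => exists t, 0 < t /\ y = Phi rho A t) <= 1 - e); [|unfold Rsup in *; rewrite Heq in Hle; lra].
        apply S2. intros y [t [Ht ->]]. apply Rnot_lt_le. intro. apply Hn. exists t; split; auto.
    + intros Hb. apply Rle_antisym.
      * apply S2. intros y [t [_ ->]]. apply (Phi_spec rho tau HPM A t HA).
      * apply Rnot_lt_le. intro Hlt.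
        set (e := 1 - Rsup (fun y => exists t, 0 < t /\ y = Phi rho A t)) in *.
        destruct (Hb (e / 2) ltac:(unfold e; lra)) as [t [Ht Hr]].
        destruct (Phi_spec rho tau HPM A t HA) as [_ [P2 _]].
        assert (1 - e / 2 <= Phi rho A t) by (apply P2; intros; apply Rge_le; auto).
        pose proof (S1 (Phi rho A t) (ex_intro _ t (conj Ht eq_refl))).
        unfold e in *. lra.
Qed.

Lemma bounded_closed {L} rho tau (HPM : PM_space L rho tau) (HW : condW tau)
  (An : nat -> L -> Prop) (A : L -> Prop) :
  (forall n, nonempty (An n) /\ Defs.bounded rho (An n)) -> nonempty A -> H_cv rho An A ->
  Defs.bounded rho A.
Proof.
  intros Hn HA Hcv. apply (bounded_iff rho tau HPM A HA).
  intros e He. destruct (Hcv (e / 4) ltac:(lra)) as [N HN].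
  specialize (HN N (le_n N)). destruct (Hn N) as [HAN HbN].
  destruct (H_unb rho tau HPM (An N) A (e/4) HAN HA HN) as [_ H2].
  destruct (proj1 (bounded_iff rho tau HPM (An N) HAN) HbN (e / 4) ltac:(lra)) as [T [HT HrT]].
  exists (Rmax (e/4) T). split. { pose proof (Rmax_r (e/4) T). lra. }
  intros p p' Hp Hp'.
  destruct (H2 p Hp) as [q [Hq Hpq]]. destruct (H2 p' Hp') as [q' [Hq' Hpq']].
  apply (Unb_sym rho tau HPM) in Hpq'. unfold Unb in *.
  set (x := Rmax (e/4) T).
  assert (Hx1 : e/4 <= x) by apply Rmax_l. assert (Hx2 : T <= x) by apply Rmax_r.
  pose proof (rho_mono rho tau HPM p q _ _ Hx1).
  pose proof (rho_mono rho tau HPM q' p' _ _ Hx1).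
  pose proof (rho_mono rho tau HPM q q' _ _ Hx2).
  pose proof (HrT q q' Hq Hq').
  assert (0 < x) by lra.
  pose proof (tri rho tau HPM HW q q' p' x (1 - e/2) (1 - e/4) H4 ltac:(lra) ltac:(lra)).
  pose proof (tri rho tau HPM HW p q p' x (1 - e/4) (1 - 3*e/4) H4 ltac:(lra) ltac:(lra)).
  lra.
Qed.

Lemma tb_closed {L} rho tau (HPM : PM_space L rho tau) (HW : condW tau)
  (An : nat -> L -> Prop) (A : L -> Prop) :
  (forall n, nonempty (An n) /\ totally_bounded rho (An n)) -> nonempty A -> H_cv rho An A ->
  totally_bounded rho A.
Proof.
  intros Hn HA Hcv t Ht. destruct (Hcv (t / 2) ltac:(lra)) as [N HN].
  specialize (HN N (le_n N)). destruct (Hn N) as [HAN HtbN].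
  destruct (H_unb rho tau HPM (An N) A (t/2) HAN HA HN) as [_ H2].
  destruct (HtbN (t/2) ltac:(lra)) as [Z HZ]. exists Z.
  intros y Hy. destruct (H2 y Hy) as [q [Hq Hyq]].
  destruct (HZ q Hq) as [z [Hz Hzq]]. exists z. split; auto.
  apply (Unb_sym rho tau HPM) in Hyq.
  replace t with (t/2 + t/2) by lra. apply (Unb_trans rho tau HPM HW _ _ _ q); auto.
Qed.

Lemma compact_tb {L} rho tau (HPM : PM_space L rho tau) (HW : condW tau) (A : L -> Prop) :
  Defs.compact rho A -> totally_bounded rho A.
Proof.
  intros Hc t Ht.
  destruct (Hc L (fun p q => exists s, 0 < s < t /\ Unb rho s p q)) as [l Hl].
  - intros p q [s [Hs Hpq]]. exists ((t - s) / 2). split; [lra|].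
    intros q' Hq'. exists (s + (t - s) / 2). split; [lra|].
    apply (Unb_trans rho tau HPM HW _ _ _ q); auto.
  - intros p Hp. exists p, (t/2). split; [lra|]. apply (Unb_refl rho tau HPM). lra.
  - exists l. intros y Hy. destruct (Hl y Hy) as [z [Hz [s [Hs Hzy]]]].
    exists z. split; auto. apply (Unb_mono rho tau HPM s); auto; lra.
Qed.

Lemma small_inv (e : R) : 0 < e -> exists K, forall k, (K <= k)%nat -> / INR (S k) < e.
Proof.
  intros He. destruct (INR_archimed e 1 ltac:(lra)) as [n Hn]. exists n. intros k Hk.
  assert (Ha : INR n <= INR (S k)) by (apply le_INR; lia).
  assert (Hp : 0 < INR (S k)) by (apply lt_0_INR; lia).
  assert (1 < INR (S k) * e) by nra.
  assert (0 < (INR (S k) * e - 1) / INR (S k)) by (apply Rdiv_lt_0_compat; lra).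
  replace ((INR (S k) * e - 1) / INR (S k)) with (e - / INR (S k)) in H0 by (field; lra).
  lra.
Qed.

Lemma inv_pos (k : nat) : 0 < / INR (S k).
Proof. apply Rinv_0_lt_compat. apply lt_0_INR. lia. Qed.

Lemma closed_limit {L} rho tau (HPM : PM_space L rho tau) (A : L -> Prop) (w : nat -> L) x :
  is_closed rho A -> (forall k, A (w k)) -> seq_cv rho w x -> A x.
Proof.
  intros Hcl Hw Hcv. apply NNPP. intro Hx.
  destruct (Hcl x Hx) as [t [Ht Hb]]. destruct (Hcv t Ht) as [N HN].
  apply (Hb (w N) (HN N (le_n N))). apply Hw.
Qed.

Definition covers {L I} (U : I -> L -> Prop) (l : list I) (S : L -> Prop) : Prop :=
  forall p, S p -> exists i, In i l /\ U i p.

Lemma split_cover {L I} (U : I -> L -> Prop) (T : L -> L -> Prop) (Z : list L) :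
  forall S : L -> Prop, (forall p, S p -> exists z, In z Z /\ T z p) ->
  (forall z, In z Z -> exists l, covers U l (fun p => S p /\ T z p)) ->
  exists l, covers U l S.
Proof.
  induction Z as [|z Z IH]; intros S HS Hl.
  - exists nil. intros p Hp. destruct (HS p Hp) as [z [[] _]].
  - destruct (Hl z (or_introl eq_refl)) as [l1 Hl1].
    destruct (IH (fun p => S p /\ ~ T z p)) as [l2 Hl2].
    + intros p [Hp Hn]. destruct (HS p Hp) as [z' [[<-|Hz'] HT]]; [contradiction|].
      exists z'; auto.
    + intros z' Hz'. destruct (Hl z' (or_intror Hz')) as [l Hl'].
      exists l. intros p [[Hp _] HT]. apply Hl'. auto.
    + exists (l1 ++ l2). intros p Hp. destruct (classic (T z p)) as [HT|HT].
      * destruct (Hl1 p (conj Hp HT)) as [i [Hi Hu]]. exists i. split; auto. apply in_or_app; auto.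
      * destruct (Hl2 p (conj Hp HT)) as [i [Hi Hu]]. exists i. split; auto. apply in_or_app; auto.
Qed.

Fixpoint nest {L} (A : L -> Prop) (f : nat -> (L -> Prop) -> L -> Prop) (k : nat) : L -> Prop :=
  match k with 0 => A | S k' => f k (nest A f k') end.

Lemma complete_compact {L} rho tau (HPM : PM_space L rho tau) (HW : condW tau) (A : L -> Prop) :
  complete rho -> is_closed rho A -> totally_bounded rho A -> Defs.compact rho A.
Proof.
  intros Hcomp Hcl Htb I U HU Hcov.
  apply NNPP; intro Hnf.
  set (NF := fun S : L -> Prop => ~ exists l, covers U l S).
  assert (HNFA : NF A) by exact Hnf.
  assert (Hne : forall S, NF S -> exists p, S p).
  { intros S HS. apply NNPP. intro Hn. apply HS. exists nil. intros p Hp. exfalso. apply Hn. eauto. }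
  destruct (Hne A HNFA) as [p0 _].
  set (r := fun k : nat => / INR (S k)).
  assert (Hstep : forall k S, NF S -> (forall p, S p -> A p) ->
            exists z, NF (fun p => S p /\ Unb rho (r k) z p)).
  { intros k S HS HSA. destruct (Htb (r k) (inv_pos k)) as [Z HZ].
    apply NNPP. intro Hn. apply HS.
    apply (split_cover U (fun z p => Unb rho (r k) z p) Z).
    - intros p Hp. apply HZ. auto.
    - intros z _. apply NNPP. intro Hn2. apply Hn. exists z. exact Hn2. }
  set (ch := fun k (S : L -> Prop) => epsilon (inhabits p0) (fun z => NF (fun p => S p /\ Unb rho (r k) z p))).
  set (Sq := nest A (fun k S => fun p => S p /\ Unb rho (r k) (ch k S) p)).
  assert (Hinv : forall k, NF (Sq k) /\ (forall p, Sq k p -> A p)).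
  { induction k as [|k [IH1 IH2]].
    - split; auto.
    - split.
      + simpl. apply (epsilon_spec (inhabits p0) (fun z => NF (fun p => Sq k p /\ Unb rho (r (S k)) z p))).
        apply Hstep; auto.
      + intros p [Hp _]. auto. }
  assert (Hmon : forall k m, (k <= m)%nat -> forall p, Sq m p -> Sq k p).
  { intros k m Hkm. induction Hkm; auto. intros p [Hp _]. auto. }
  set (c := fun k => ch (S k) (Sq k)).
  assert (Hball : forall k p, Sq (S k) p -> Unb rho (r (S k)) (c k) p).
  { intros k p [_ Hp]. exact Hp. }
  set (w := fun k => epsilon (inhabits p0) (fun p => Sq (S k) p)).
  assert (Hw : forall k, Sq (S k) (w k)).
  { intro k. apply (epsilon_spec (inhabits p0) (fun p => Sq (S k) p)). apply Hne. apply Hinv. }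
  assert (Hwc : forall k m, (k <= m)%nat -> Unb rho (r (S k)) (c k) (w m)).
  { intros k m Hkm. apply Hball. apply (Hmon (S k) (S m)); [lia|]. apply Hw. }
  assert (Hcau : seq_cauchy rho w).
  { intros t Ht. destruct (small_inv (t/2) ltac:(lra)) as [K HK].
    exists K. intros m n Hm Hn.
    pose proof (HK (S K) ltac:(lia)).
    pose proof (Hwc K m Hm). pose proof (Hwc K n Hn).
    apply (Unb_sym rho tau HPM) in H0.
    pose proof (Unb_trans rho tau HPM HW _ _ _ _ _ H0 H1).
    eapply (Unb_mono rho tau HPM); [|exact H2]; unfold r in *; lra. }
  destruct (Hcomp w Hcau) as [x Hx].
  assert (HAx : A x).
  { apply (closed_limit rho tau HPM A w x Hcl); auto. intro k. apply (proj2 (Hinv (S k))). apply Hw. }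
  destruct (Hcov x HAx) as [i Hi]. destruct (HU i x Hi) as [t [Ht Hsub]].
  destruct (small_inv (t/4) ltac:(lra)) as [K HK].
  destruct (Hx (t/4) ltac:(lra)) as [M HM].
  set (m := Nat.max K M).
  apply (proj1 (Hinv (S K))). exists (i :: nil). intros p Hp. exists i. split; [left; auto|].
  apply Hsub.
  pose proof (HM m ltac:(unfold m; lia)).
  pose proof (Hwc K m ltac:(unfold m; lia)). apply (Unb_sym rho tau HPM) in H0.
  pose proof (Hball K p Hp).
  pose proof (Unb_trans rho tau HPM HW _ _ _ _ _ H H0).
  pose proof (Unb_trans rho tau HPM HW _ _ _ _ _ H2 H1).
  pose proof (HK (S K) ltac:(lia)).
  eapply (Unb_mono rho tau HPM); [|exact H3]; unfold r in *; lra.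
Qed.

Lemma geo_pos (e : R) (j : nat) : 0 < e -> 0 < e * (/2)^j.
Proof. intros He. apply Rmult_lt_0_compat; auto. apply pow_lt. lra. Qed.

Lemma geo_S (e : R) (j : nat) : e * (/2)^(S j) = e * (/2)^j * /2.
Proof. simpl. ring. Qed.

Lemma geo_small (e : R) : 0 < e -> forall d, 0 < d -> exists K, forall j, (K <= j)%nat -> e * (/2)^j < d.
Proof.
  intros He d Hd. destruct (pow_lt_1_zero (/2) ltac:(rewrite Rabs_pos_eq; lra) (d / e)
    ltac:(apply Rdiv_lt_0_compat; lra)) as [K HK].
  exists K. intros j Hj. specialize (HK j Hj).
  rewrite Rabs_pos_eq in HK by (apply pow_le; lra).
  apply (Rmult_lt_compat_l e) in HK; auto.
  replace (e * (d / e)) with d in HK by (field; lra). exact HK.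
Qed.

Lemma Pf_complete {L} rho tau (HPM : PM_space L rho tau) (HW : condW tau) (An : nat -> L -> Prop) :
  complete rho -> (forall n, nonempty (An n)) -> H_cauchy rho An ->
  exists A, Pf rho A /\ H_cv rho An A.
Proof.
  intros Hcomp Hne Hcau.
  assert (Hc : forall t, 0 < t -> exists N, forall m n, (N <= m)%nat -> (N <= n)%nat ->
             forall p, An m p -> exists q, An n q /\ Unb rho t p q).
  { intros t Ht. destruct (Hcau t Ht) as [N HN]. exists N. intros m n Hm Hn.
    apply (proj1 (H_unb rho tau HPM (An m) (An n) t (Hne m) (Hne n) (HN m n Hm Hn))). }
  set (A := fun p => forall t, 0 < t -> forall N, exists n, (N <= n)%nat /\ exists q, An n q /\ Unb rho t p q).
  assert (Hcl : is_closed rho A).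
  { intros p Hp. apply NNPP. intro Hn. apply Hp. intros t Ht N. apply NNPP. intro Hn2.
    apply Hn. exists (t/2). split; [lra|]. intros q Hq Aq.
    destruct (Aq (t/2) ltac:(lra) N) as [n [Hn' [q' [Hq' Hu]]]].
    apply Hn2. exists n. split; auto. exists q'. split; auto.
    replace t with (t/2 + t/2) by lra. apply (Unb_trans rho tau HPM HW _ _ _ q); auto. }
  assert (Hb : forall t, 0 < t -> exists N, forall n, (N <= n)%nat -> forall a, A a ->
             exists q, An n q /\ Unb rho t a q).
  { intros t Ht. destruct (Hc (t/2) ltac:(lra)) as [N HN]. exists N. intros n Hn a Ha.
    destruct (Ha (t/2) ltac:(lra) N) as [m [Hm [q' [Hq' Hu]]]].
    destruct (HN m n Hm Hn q' Hq') as [q [Hq Hu2]]. exists q. split; auto.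
    replace t with (t/2 + t/2) by lra. apply (Unb_trans rho tau HPM HW _ _ _ q'); auto. }
  assert (Ha : forall eps, 0 < eps -> exists N, forall n, (N <= n)%nat -> forall p, An n p ->
             exists a, A a /\ Unb rho eps p a).
  { intros eps Heps.
    set (g := fun j : nat => eps * (/2)^j).
    assert (Hgp : forall j, 0 < g j) by (intro j; apply geo_pos; auto).
    assert (HgS : forall j, g (S j) = g j * /2) by (intro j; apply geo_S).
    assert (HNf : forall k, {N | forall m n, (N <= m)%nat -> (N <= n)%nat ->
             forall p, An m p -> exists q, An n q /\ Unb rho (g (S (S k))) p q}).
    { intro k. apply constructive_indefinite_description. apply Hc. apply Hgp. }
    set (Nf := fun k => proj1_sig (HNf k)).
    assert (HNfs : forall k m n, (Nf k <= m)%nat -> (Nf k <= n)%nat ->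
             forall p, An m p -> exists q, An n q /\ Unb rho (g (S (S k))) p q).
    { intro k. exact (proj2_sig (HNf k)). }
    set (M := fix M k := match k with O => Nf O | S k' => S (Nat.max (M k') (Nf k)) end).
    assert (HM1 : forall k, (Nf k <= M k)%nat).
    { intros [|k]; simpl; lia. }
    assert (HM2 : forall k, (M k <= M (S k))%nat).
    { intro k. simpl. lia. }
    assert (HM3 : forall k, (k <= M k)%nat).
    { induction k; simpl; lia. }
    exists (M O). intros n Hn p Hp.
    set (idx := fun k => match k with O => n | S _ => M k end).
    assert (Hidx : forall k, (M k <= idx k)%nat).
    { intros [|k]; simpl; auto. }
    set (ps := fix ps k := match k with O => p | S k' =>
       epsilon (inhabits p) (fun q => An (M k) q /\ Unb rho (g (S (S k'))) (ps k') q) end).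
    assert (Hps : forall k, An (idx k) (ps k)).
    { induction k as [|k IH].
      - exact Hp.
      - simpl. apply (epsilon_spec (inhabits p) (fun q => An (M (S k)) q /\ Unb rho (g (S (S k))) (ps k) q)).
        apply (HNfs k (idx k) (M (S k))).
        + pose proof (HM1 k). pose proof (Hidx k). lia.
        + pose proof (HM1 k). pose proof (HM2 k). lia.
        + exact IH. }
    assert (Hstep : forall k, Unb rho (g (S (S k))) (ps k) (ps (S k))).
    { intro k. simpl.
      apply (epsilon_spec (inhabits p) (fun q => An (M (S k)) q /\ Unb rho (g (S (S k))) (ps k) q)).
      apply (HNfs k (idx k) (M (S k))).
      + pose proof (HM1 k). pose proof (Hidx k). lia.
      + pose proof (HM1 k). pose proof (HM2 k). lia.
      + apply Hps. }
    assert (Hdist : forall k d, Unb rho (g (S k) - g (S (S (d + k)))) (ps k) (ps (S (d + k)))).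
    { intros k d. induction d as [|d IH].
      - simpl. eapply (Unb_mono rho tau HPM); [|apply Hstep].
        rewrite (HgS (S k)). lra.
      - pose proof (Unb_trans rho tau HPM HW _ _ _ _ _ IH (Hstep (S (d + k)))).
        eapply (Unb_mono rho tau HPM); [|exact H].
        change (S d + k)%nat with (S (d + k)). rewrite (HgS (S (S (d + k)))).
        pose proof (Hgp (S (S (d + k)))). lra. }
    assert (Hd : forall k m, (k <= m)%nat -> Unb rho (g (S k)) (ps k) (ps m)).
    { intros k m Hkm. destruct (Nat.eq_dec k m) as [<-|Hne'].
      - apply (Unb_refl rho tau HPM). apply Hgp.
      - replace m with (S ((m - S k) + k)) by lia.
        eapply (Unb_mono rho tau HPM); [|apply Hdist].
        pose proof (Hgp (S (S (m - S k + k)))). lra. }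
    assert (Hcs : seq_cauchy rho ps).
    { intros t Ht. destruct (geo_small eps Heps (t/2) ltac:(lra)) as [K HK].
      exists K. intros m m' Hm Hm'.
      pose proof (Hd K m Hm). pose proof (Hd K m' Hm').
      apply (Unb_sym rho tau HPM) in H.
      pose proof (Unb_trans rho tau HPM HW _ _ _ _ _ H H0).
      eapply (Unb_mono rho tau HPM); [|exact H1].
      pose proof (HK (S K) ltac:(lia)). unfold g in *. lra. }
    destruct (Hcomp ps Hcs) as [a Hlim].
    exists a. split.
    - intros t Ht N'. destruct (geo_small eps Heps (t/2) ltac:(lra)) as [K HK].
      set (k := Nat.max K N').
      destruct (Hlim (t/2) ltac:(lra)) as [M' HM'].
      set (m := Nat.max (S k) M').
      exists (idx (S k)). split.
      + change (idx (S k)) with (M (S k)). pose proof (HM3 (S k)). assert (N' <= k)%nat by (unfold k; lia). lia.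
      + exists (ps (S k)). split; [apply Hps|].
        pose proof (HM' m ltac:(unfold m; lia)).
        pose proof (Hd (S k) m ltac:(unfold m; lia)).
        apply (Unb_sym rho tau HPM) in H0.
        pose proof (Unb_trans rho tau HPM HW _ _ _ _ _ H H0).
        eapply (Unb_mono rho tau HPM); [|exact H1].
        pose proof (HK (S (S k)) ltac:(unfold k; lia)). unfold g in *. lra.
    - destruct (Hlim (eps/4) ltac:(lra)) as [M' HM'].
      pose proof (HM' M' (le_n _)). apply (Unb_sym rho tau HPM) in H.
      pose proof (Hd O M' ltac:(lia)).
      pose proof (Unb_trans rho tau HPM HW _ _ _ _ _ H0 H).
      eapply (Unb_mono rho tau HPM); [|exact H1].
      unfold g. simpl. lra. }
  destruct (Ha 1 ltac:(lra)) as [N0 HN0].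
  destruct (Hne N0) as [p0 Hp0].
  destruct (HN0 N0 (le_n _) p0 Hp0) as [a0 [Ha0 _]].
  assert (HAne : nonempty A) by (exists a0; exact Ha0).
  exists A. split; [split; auto|].
  intros t Ht.
  destruct (Ha (t/2) ltac:(lra)) as [Na HNa]. destruct (Hb (t/2) ltac:(lra)) as [Nb HNb].
  exists (Nat.max Na Nb). intros n Hn.
  apply (H_of_unb rho tau HPM (An n) A (t/2) t (Hne n) HAne ltac:(lra)).
  - apply HNa. lia.
  - apply HNb. lia.
Qed.

Theorem theorem4p5 (L : Type) (rho : L -> L -> dfun) (tau : dfun -> dfun -> dfun)
  (HPM : PM_space L rho tau) (Hsup : sup_continuous tau) (HW : condW tau) :
  H_closed_family rho (Pfb rho) /\ H_closed_family rho (Pftb rho) /\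
  (complete rho -> H_complete_family rho (Pfb rho) /\ H_complete_family rho (Pk rho)).
Proof.
  split; [|split].
  - intros An A HAn HA Hcv. split; auto.
    apply (bounded_closed rho tau HPM HW An A); [|apply HA|auto].
    intro n. destruct (HAn n) as [[Hne _] Hb]. auto.
  - intros An A HAn HA Hcv. split; auto.
    apply (tb_closed rho tau HPM HW An A); [|apply HA|auto].
    intro n. destruct (HAn n) as [[Hne _] Hb]. auto.
  - intros Hcomp. split.
    + intros An HAn Hc.
      destruct (Pf_complete rho tau HPM HW An Hcomp) as [A [HA Hcv]]; auto.
      { intro n. apply (HAn n). }
      exists A. split; auto. split; auto.
      apply (bounded_closed rho tau HPM HW An A); [|apply HA|auto].
      intro n. destruct (HAn n) as [[Hne _] Hb]. auto.
    + intros An HAn Hc.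
      destruct (Pf_complete rho tau HPM HW An Hcomp) as [A [HA Hcv]]; auto.
      { intro n. apply (HAn n). }
      exists A. split; auto. split; [apply HA|].
      apply (complete_compact rho tau HPM HW A Hcomp); [apply HA|].
      apply (tb_closed rho tau HPM HW An A); [|apply HA|auto].
      intro n. destruct (HAn n) as [Hne Hk]. split; auto.
      apply (compact_tb rho tau HPM HW); auto.
Qed.
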